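(* Let $\{\theta_k\}_{k=0}^\infty$ be the positive sequence with $\theta_0=1$ and $\theta_{k+1}^2-\theta_{k+1}-\theta_k^2=0$ for $k=0,1,\dots$. Then there exists a real constant $\zeta$ (numerically $\zeta\approx0.646$) such that \[ \theta_k=\frac{k+\zeta+1}{2}+\frac{\log k}{4}+o(1)\quad\text{as }k\to\infty. \]
   Context: $\log$ is the natural logarithm. *)

(* Defs.v *)
From Stdlib Require Import Reals.
From Coquelicot Require Import Coquelicot.

(* Main.v *)
Require Import Defs.
From Stdlib Require Import Reals.
From Coquelicot Require Import Coquelicot.
From Stdlib Require Import Lra Psatz.
Open Scope R_scope.

Lemma ln_le_xm1 (x : R) : 0 < x -> ln x <= x - 1.
Proof. intros Hx. pose proof (exp_ineq1_le (ln x)). rewrite exp_ln in H; lra. Qed.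

Lemma ln_diff_bounds (K : R) : 1 <= K ->
  1 / (K + 1) <= ln (K + 1) - ln K <= 1 / K.
Proof.
  intros HK. split.
  - assert (H := ln_le_xm1 (K / (K+1)) ltac:(apply Rdiv_lt_0_compat; lra)).
    rewrite ln_div in H by lra.
    assert (K / (K+1) - 1 = - (1/(K+1))) by (field; lra). lra.
  - assert (H := ln_le_xm1 ((K+1) / K) ltac:(apply Rdiv_lt_0_compat; lra)).
    rewrite ln_div in H by lra.
    assert ((K+1) / K - 1 = 1/K) by (field; lra). lra.
Qed.

Section S.
Variable theta : nat -> R.
Hypothesis hpos : forall k : nat, 0 < theta k.
Hypothesis h0 : theta 0%nat = 1.
Hypothesis hrec : forall k : nat, theta (S k) ^ 2 - theta (S k) - theta k ^ 2 = 0.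

Lemma step_pos k : 1 <= theta k -> theta (S k) - theta k - 1/2 > 0.
Proof.
  intros H. pose proof (hrec k). pose proof (hpos (S k)).
  nra.
Qed.

Lemma LB k : 1 + INR k / 2 <= theta k.
Proof.
  induction k.
  - simpl. lra.
  - rewrite S_INR. pose proof (pos_INR k).
    assert (1 <= theta k) by lra. pose proof (step_pos k H0). lra.
Qed.

Lemma step_eq k : theta (S k) - theta k - 1/2 = 1 / (4 * (theta k + theta (S k) - 1/2)).
Proof.
  pose proof (LB k). pose proof (LB (S k)). pose proof (pos_INR k). rewrite S_INR in H0.
  pose proof (hrec k).
  assert (D : theta k + theta (S k) - 1/2 > 0) by lra.
  apply (Rmult_eq_reg_r (4 * (theta k + theta (S k) - 1/2))); [|lra].
  field_simplify; [|lra]. nra.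
Qed.

Lemma sqrt_gap (K : R) : 0 <= K -> sqrt (K + 2) - sqrt (K + 1) >= 1 / (4 * (K + 2)).
Proof.
  intros HK.
  pose proof (sqrt_sqrt (K+1) ltac:(lra)). pose proof (sqrt_sqrt (K+2) ltac:(lra)).
  set (u := sqrt (K+1)) in *. set (v := sqrt (K+2)) in *.
  assert (0 <= u) by apply sqrt_pos. assert (0 <= v) by apply sqrt_pos.
  assert (u < v) by nra. assert (1 <= v) by nra.
  assert ((v - u) * (v + u) = 1) by nra.
  rewrite <- H0.
  apply Rle_ge. unfold Rdiv. rewrite Rmult_1_l.
  assert (v - u >= 1 / (2 * v)).
  { apply Rle_ge. apply (Rmult_le_reg_r (2*v)); [lra|].
    field_simplify; nra. }
  assert (1/(2*v) >= / (4 * (v*v))).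
  { apply Rle_ge. unfold Rdiv. rewrite Rmult_1_l.
    apply Rinv_le_contravar; nra. }
  lra.
Qed.

Lemma UB k : theta k <= INR k / 2 + sqrt (INR k + 1).
Proof.
  induction k.
  - simpl. rewrite h0, Rplus_0_l, sqrt_1. lra.
  - pose proof (step_eq k). pose proof (LB k). pose proof (LB (S k)).
    pose proof (pos_INR k). rewrite S_INR in *.
    pose proof (sqrt_gap (INR k) H2).
    assert (1 / (4 * (theta k + theta (S k) - 1 / 2)) <= 1 / (4 * (INR k + 2))).
    { unfold Rdiv. rewrite !Rmult_1_l. apply Rinv_le_contravar; lra. }
    replace (INR k + 1 + 1) with (INR k + 2) by ring. lra.
Qed.

Definition K (n : nat) := INR n + 1.
Definition e (n : nat) := theta (S n) - (K n + 1) / 2 - ln (K n) / 4.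
Definition T (n : nat) := 24 / sqrt (K n).

Lemma K_ge1 n : 1 <= K n.
Proof. unfold K. pose proof (pos_INR n). lra. Qed.
Lemma K_S n : K (S n) = K n + 1.
Proof. unfold K. rewrite S_INR. ring. Qed.

Lemma e_diff n : e (S n) - e n =
  1 / (4 * (theta (S n) + theta (S (S n)) - 1/2)) - (ln (K n + 1) - ln (K n)) / 4.
Proof.
  unfold e. rewrite K_S. pose proof (step_eq (S n)). lra.
Qed.

Lemma D_bounds n :
  K n + 2 <= theta (S n) + theta (S (S n)) - 1/2 <= K n + 2 * sqrt (K n + 2).
Proof.
  pose proof (LB (S n)). pose proof (LB (S (S n))).
  pose proof (UB (S n)). pose proof (UB (S (S n))).
  rewrite !S_INR in *. fold (K n) in *.
  replace (INR n + 1 + 1) with (K n + 1) in * by (unfold K; ring).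
  replace (K n + 1 + 1) with (K n + 2) in * by ring.
  pose proof (K_ge1 n).
  assert (sqrt (K n + 1) <= sqrt (K n + 2)) by (apply sqrt_le_1_alt; lra).
  split; lra.
Qed.

Lemma e_decr n : e (S n) <= e n.
Proof.
  pose proof (e_diff n). pose proof (D_bounds n). pose proof (K_ge1 n).
  pose proof (ln_diff_bounds (K n) H1).
  assert (1 / (4 * (theta (S n) + theta (S (S n)) - 1/2)) <= 1 / (4 * (K n + 1))).
  { unfold Rdiv. rewrite !Rmult_1_l. apply Rinv_le_contravar; lra. }
  assert (1 / (4 * (K n + 1)) = (1 / (K n + 1)) / 4) by (field; lra).
  lra.
Qed.

Lemma T_diff n : T n - T (S n) >= 12 / ((K n + 1) * sqrt (K n + 1)).
Proof.
  unfold T. rewrite K_S. pose proof (K_ge1 n). set (k := K n) in *.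
  pose proof (sqrt_sqrt k ltac:(lra)). pose proof (sqrt_sqrt (k+1) ltac:(lra)).
  assert (0 < sqrt k) by (apply sqrt_lt_R0; lra).
  assert (0 < sqrt (k+1)) by (apply sqrt_lt_R0; lra).
  set (u := sqrt k) in *. set (v := sqrt (k+1)) in *.
  rewrite <- H1.
  assert (u < v) by nra.
  apply Rle_ge.
  assert (24 / u - 24 / v = 24 * (v - u) / (u * v)) by (field; lra).
  rewrite H5.
  assert ((v - u) * (v + u) = 1) by nra.
  assert (v - u = 1 / (v + u)).
  { apply (Rmult_eq_reg_r (v+u)); [|lra]. unfold Rdiv; rewrite Rmult_1_l, Rinv_l by lra; lra. }
  rewrite H7.
  assert (24 * (1 / (v + u)) / (u * v) = 24 / ((v+u)*(u*v))) by (field; nra).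
  rewrite H8.
  assert ((v+u)*(u*v) <= 2 * (v*v*v)).
  { assert (0 < u*v) by nra. assert (u*v <= v*v) by nra. nra. }
  assert (12 / (v*v*v) = 24 / (2 * (v*v*v))) by (field; nra).
  replace (v * v * v) with (v*v*v) by ring.
  rewrite H10. unfold Rdiv. apply Rmult_le_compat_l; [lra|].
  apply Rinv_le_contravar; nra.
Qed.

Lemma g_incr n : e n - T n <= e (S n) - T (S n).
Proof.
  pose proof (e_diff n). pose proof (D_bounds n). pose proof (K_ge1 n).
  pose proof (ln_diff_bounds (K n) H1). pose proof (T_diff n).
  set (k := K n) in *.
  set (D := theta (S n) + theta (S (S n)) - 1/2) in *.
  set (w := sqrt (k+2)) in *. set (v := sqrt (k+1)) in *.
  assert (0 < w) by (apply sqrt_lt_R0; lra).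
  assert (0 < v) by (apply sqrt_lt_R0; lra).
  assert (Hw : w * w = k + 2) by (apply sqrt_sqrt; lra).
  assert (Hv : v * v = k + 1) by (apply sqrt_sqrt; lra).
  assert (1 / (4*D) >= 1 / (4 * (k + 2*w))).
  { apply Rle_ge. unfold Rdiv. rewrite !Rmult_1_l. apply Rinv_le_contravar; lra. }
  assert (1 / (4 * (k + 2*w)) - (1/k)/4 >= - (w / (2 * (k*k)))).
  { assert (E1 : 1 / (4 * (k + 2*w)) - (1/k)/4 = - (2*w) / (4 * k * (k + 2*w))) by (field; lra).
    rewrite E1. apply Rle_ge.
    assert (E2 : - (2 * w) / (4 * k * (k + 2 * w)) = - (w / (2 * k * (k + 2*w)))) by (field; lra).
    rewrite E2. apply Ropp_le_contravar. unfold Rdiv. apply Rmult_le_compat_l; [lra|].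
    apply Rinv_le_contravar; nra. }
  assert (w / (2 * (k*k)) <= 12 / ((k+1) * v)).
  { assert (w * v <= k + 2) by nra.
    apply (Rmult_le_reg_r (2 * (k*k) * ((k+1)*v))). { apply Rmult_lt_0_compat; nra. }
    field_simplify; try nra. }
  lra.
Qed.

End S.

Theorem theorem7 (theta : nat -> R)
  (hpos : forall k : nat, 0 < theta k)
  (h0 : theta 0%nat = 1)
  (hrec : forall k : nat, theta (S k) ^ 2 - theta (S k) - theta k ^ 2 = 0) :
  exists zeta : R,
    is_lim_seq
      (fun k : nat => theta k - ((INR k + zeta + 1) / 2 + ln (INR k) / 4))
      0.
Proof.
  assert (Hb : forall n, e theta 0 - T 0 <= e theta n).
  { intros n.
    assert (e theta 0 - T 0 <= e theta n - T n).
    { induction n. lra. pose proof (g_incr theta hpos h0 hrec n). lra. }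
    assert (0 <= T n).
    { unfold T. pose proof (K_ge1 n). assert (0 < sqrt (K n)) by (apply sqrt_lt_R0; lra).
      unfold Rdiv. apply Rmult_le_pos; [lra|]. left; apply Rinv_0_lt_compat; lra. }
    lra. }
  destruct (ex_finite_lim_seq_decr (e theta) _ (e_decr theta hpos h0 hrec) Hb) as [l Hl].
  exists (2 * l).
  apply is_lim_seq_incr_1.
  apply is_lim_seq_ext with (u := fun n => e theta n - l).
  { intros n. unfold e, K. rewrite S_INR. field. }
  replace (Finite 0) with (Finite (l - l)) by (f_equal; ring).
  apply is_lim_seq_minus'; [exact Hl | apply is_lim_seq_const].
Qed.
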